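(* Let $k\ge 1$ and $P\subseteq\{0,1\}^k$. If $P\subseteq\operatorname{Ham}_k(\{0,k\})$, then $O_{\operatorname{Maj}}(P)=P$. Otherwise, if $P=\operatorname{Ham}_k(S)$ for some $S\subseteq\{0,\dots,k\}$ with $S\setminus\{0,k\}$ nonempty, then $O_{\operatorname{Maj}}(P)=\operatorname{Ham}_k\big(\{0,\dots,k\}\cap\{2\min S-k+1,\dots,2\max S-1\}\big)$.
   Context: $\operatorname{Ham}_k(S)=\{x\in\{0,1\}^k:|x|\in S\}$ with $|x|$ the Hamming weight. For odd $L$, $\operatorname{Maj}_L(x)=1$ iff $\sum_{i=1}^Lx_i>L/2$. For $f:\{0,1\}^L\to\{0,1\}$ and $P\subseteq\{0,1\}^k$, $O_f(P)=\{x\in\{0,1\}^k:\exists x^{(1)},\dots,x^{(L)}\in P\text{ with }x_i=f(x^{(1)}_i,\dots,x^{(L)}_i)\ \forall i\in[k]\}$. $O_{\operatorname{Maj}}(P)=\bigcup_{L\text{ odd}}O_{\operatorname{Maj}_L}(P)$. *)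

(* Defs.v *)
From mathcomp Require Import all_boot all_order all_algebra.
Set Implicit Arguments. Unset Strict Implicit. Unset Printing Implicit Defensive.

Notation cube k := {ffun 'I_k -> bool}.

Definition hweight (k : nat) (x : cube k) : nat := #|[set i | x i]|.

(* Ham_k(S) for S ⊆ {0,...,k}, represented as S : {set 'I_k.+1} *)
Definition Ham (k : nat) (S : {set 'I_k.+1}) : {set cube k} :=
  [set x : cube k | [exists s in S, hweight x == val s]].

(* Maj_L(y) = 1 iff sum_i y_i > L/2, i.e. 2 * sum > L *)
Definition Maj (L : nat) (y : {ffun 'I_L -> bool}) : bool :=
  L < 2 * #|[set j | y j]|.

Definition Ofun (k L : nat) (f : {ffun 'I_L -> bool} -> bool)
  (P : {set cube k}) : {set cube k} :=
  [set x : cube k | [exists xs : {ffun 'I_L -> cube k},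
     [forall j, xs j \in P] && [forall i, x i == f [ffun j => xs j i]]]].

Definition OMaj (k : nat) (P : {set cube k}) (x : cube k) : Prop :=
  exists L : nat, odd L /\ x \in Ofun (@Maj L) P.

Definition minS (k : nat) (S : {set 'I_k.+1}) : nat := \big[minn/k]_(s in S) val s.
Definition maxS (k : nat) (S : {set 'I_k.+1}) : nat := \max_(s in S) val s.

(* {0,...,k} ∩ {2 min S - k + 1, ..., 2 max S - 1}, bounds taken in int *)
Definition window (k : nat) (S : {set 'I_k.+1}) : {set 'I_k.+1} :=
  [set i : 'I_k.+1 |
     ((2 * (minS S)%:Z - k%:Z + 1 <= (val i)%:Z)%R &&
      ((val i)%:Z <= 2 * (maxS S)%:Z - 1)%R)].

Definition ends (k : nat) : {set 'I_k.+1} :=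
  [set i : 'I_k.+1 | (val i == 0) || (val i == k)].

(* Main.v *)
Require Import Defs.
From mathcomp Require Import all_boot all_order all_algebra all_fingroup zify.
Set Implicit Arguments. Unset Strict Implicit. Unset Printing Implicit Defensive.

Lemma sum_shift1 N (g : nat -> nat) :
  \sum_(i < N) g ((i + 1) %% N) = \sum_(i < N) g i.
Proof.
case: N => [|n]; first by rewrite !big_ord0.
rewrite big_ord_recr big_ord_recl /= addn1 modnn addnC.
congr (_ + _).
apply: eq_bigr => i _.
by rewrite addn1 modn_small ?ltnS.
Qed.

Lemma sum_rot N j (f : nat -> nat) :
  \sum_(i < N) f ((i + j) %% N) = \sum_(i < N) f i.
Proof.
elim: j => [|j IH].
  by apply: eq_bigr => i _; rewrite addn0 modn_small.
rewrite -[RHS]IH -(sum_shift1 N (fun x => f ((x + j) %% N))).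
apply: eq_bigr => i _.
by rewrite modnDml addnAC addn1 addnS.
Qed.

Lemma sum_lt N a : \sum_(i < N) (i < a : nat) = minn a N.
Proof.
elim: N => [|N IH]; first by rewrite big_ord0 minn0.
rewrite big_ord_recr /= IH.
case: (ltnP N a) => h /=; lia.
Qed.

Lemma sum_rot_lt N j a : a <= N -> \sum_(i < N) ((i + j) %% N < a : nat) = a.
Proof.
move=> ha.
rewrite (sum_rot N j (fun x => nat_of_bool (x < a))) sum_lt; lia.
Qed.

Lemma card_sum (T : finType) (p : pred T) : #|[set i | p i]| = \sum_i (p i : nat).
Proof.
rewrite cardsE -sum1_card big_mkcond /=.
by apply: eq_bigr => i _; rewrite unfold_in; case: (p i).
Qed.

Lemma hweight_sum k (y : cube k) : hweight y = \sum_i (y i : nat).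
Proof. by rewrite /hweight card_sum. Qed.

Definition rowF k w a b j1 j2 (n : nat) : bool :=
  if n < w then (n + j1) %% w < a else (n - w + j2) %% (k - w) < b.

Definition row k w a b j1 j2 : cube k := [ffun i : 'I_k => rowF k w a b j1 j2 i].

Lemma row_weight k w a b j1 j2 : w <= k -> a <= w -> b <= k - w ->
  hweight (row k w a b j1 j2) = a + b.
Proof.
move=> hw ha hb.
rewrite hweight_sum (eq_bigr (fun i : 'I_k => nat_of_bool (rowF k w a b j1 j2 i))); last first.
  by move=> i _; rewrite ffunE.
rewrite -(big_mkord xpredT (fun n => nat_of_bool (rowF k w a b j1 j2 n))).
rewrite (big_cat_nat (leq0n w) hw) /=.
congr (_ + _).
  rewrite (eq_big_nat _ _ (F2 := fun n => nat_of_bool ((n + j1) %% w < a))); last first.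
    by move=> i /andP [_ hi]; rewrite /rowF hi.
  by rewrite big_mkord sum_rot_lt.
rewrite -{1}[w]add0n big_addn.
rewrite (eq_big_nat _ _ (F2 := fun n => nat_of_bool ((n + j2) %% (k - w) < b))); last first.
  by move=> i /andP [_ hi]; rewrite /rowF ltnNge leq_addl /= addnK.
by rewrite big_mkord sum_rot_lt.
Qed.

Lemma count_sum (T : Type) (p : pred T) (s : seq T) : count p s = \sum_(x <- s) (p x : nat).
Proof. by elim: s => [|x s IH]; rewrite ?big_nil ?big_cons //= IH. Qed.

Lemma sum_iota (F : nat -> nat) N : \sum_(j <- iota 0 N) F j = \sum_(j < N) F j.
Proof. by rewrite -(big_mkord xpredT F) /index_iota subn0. Qed.

Definition blk k w a b : seq (cube k) :=
  flatten [seq [seq row k w a b j1 j2 | j2 <- iota 0 (maxn (k - w) 1)]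
          | j1 <- iota 0 (maxn w 1)].

Lemma count_blk k w a b (p : pred (cube k)) :
  count p (blk k w a b) =
  \sum_(j1 < maxn w 1) \sum_(j2 < maxn (k - w) 1) (p (row k w a b j1 j2) : nat).
Proof.
rewrite /blk count_flatten sumnE !big_map sum_iota.
apply: eq_bigr => j1 _.
by rewrite count_map count_sum sum_iota.
Qed.

Lemma size_blk k w a b : size (blk k w a b) = maxn w 1 * maxn (k - w) 1.
Proof.
rewrite -count_predT count_blk.
rewrite (eq_bigr (fun _ => maxn (k - w) 1)); last first.
  by move=> j1 _; rewrite sum_nat_const card_ord muln1.
by rewrite sum_nat_const card_ord.
Qed.

Lemma count_blkA k w a b (i : 'I_k) : i < w -> a <= w ->
  count (fun y : cube k => y i) (blk k w a b) = a * maxn (k - w) 1.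
Proof.
move=> hi ha.
rewrite count_blk.
have hw : maxn w 1 = w by lia.
rewrite hw.
rewrite (eq_bigr (fun j1 : 'I_w => maxn (k - w) 1 * nat_of_bool ((j1 + i) %% w < a))); last first.
  move=> j1 _.
  rewrite (eq_bigr (fun _ => nat_of_bool ((j1 + i) %% w < a))); last first.
    by move=> j2 _; rewrite ffunE /rowF hi addnC.
  by rewrite sum_nat_const card_ord.
by rewrite -big_distrr /= sum_rot_lt // mulnC.
Qed.

Lemma count_blkB k w a b (i : 'I_k) : w <= i -> b <= k - w ->
  count (fun y : cube k => y i) (blk k w a b) = b * maxn w 1.
Proof.
move=> hi hb.
have hik := ltn_ord i.
rewrite count_blk.
have hw : maxn (k - w) 1 = k - w by lia.
rewrite hw.
rewrite (eq_bigr (fun j1 : 'I_(maxn w 1) => b)); last first.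
  move=> j1 _.
  rewrite (eq_bigr (fun j2 : 'I_(k - w) => nat_of_bool ((j2 + (i - w)) %% (k - w) < b))); last first.
    by move=> j2 _; rewrite ffunE /rowF ltnNge hi /= addnC.
  by rewrite sum_rot_lt.
by rewrite sum_nat_const card_ord mulnC.
Qed.

Definition rep (T : Type) r (l : seq T) := flatten (nseq r l).

Lemma count_rep (T : Type) (p : pred T) r l : count p (rep r l) = r * count p l.
Proof. by elim: r => [|r IH] //=; rewrite /rep /= count_cat -/(rep r l) IH mulSn. Qed.

Lemma mem_rep (T : eqType) r (l : seq T) y : y \in rep r l -> y \in l.
Proof. by elim: r => [|r IH] //=; rewrite /rep /= mem_cat -/(rep r l) => /orP [] // /IH. Qed.

Definition Wit k (P : {set cube k}) (x : cube k) (s : seq (cube k)) :=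
  [/\ 0 < size s, forall y, y \in s -> y \in P &
      forall i, (x i -> size s < 2 * count (fun y : cube k => y i) s) /\
                (~~ x i -> 2 * count (fun y : cube k => y i) s < size s)].

Definition xw k w : cube k := [ffun i : 'I_k => i < w].

Lemma row_in k w a b j1 j2 (S : {set 'I_k.+1}) : w <= k -> a <= w -> b <= k - w ->
  [exists t in S, val t == a + b] -> row k w a b j1 j2 \in Ham S.
Proof.
move=> hw ha hb /existsP [t /andP [ht /eqP e]].
rewrite inE; apply/existsP; exists t; rewrite ht row_weight //.
by apply/eqP; rewrite e.
Qed.

Lemma design k w (S : {set 'I_k.+1}) a1 b1 a2 b2 r1 r2 : w <= k ->
  a1 <= w -> b1 <= k - w -> a2 <= w -> b2 <= k - w ->
  [exists t in S, val t == a1 + b1] -> [exists t in S, val t == a2 + b2] ->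
  0 < r1 + r2 ->
  (0 < w -> (r1 + r2) * w < 2 * (r1 * a1 + r2 * a2)) ->
  (w < k -> 2 * (r1 * b1 + r2 * b2) < (r1 + r2) * (k - w)) ->
  Wit (Ham S) (xw k w) (rep r1 (blk k w a1 b1) ++ rep r2 (blk k w a2 b2)).
Proof.
move=> hw ha1 hb1 ha2 hb2 hS1 hS2 hr hA hB.
have hsz : size (rep r1 (blk k w a1 b1) ++ rep r2 (blk k w a2 b2)) =
   (r1 + r2) * (maxn w 1 * maxn (k - w) 1).
  by rewrite size_cat -!count_predT !count_rep !count_predT !size_blk mulnDl.
split.
- rewrite hsz !muln_gt0 hr /=; apply/andP; split; lia.
- move=> y; rewrite mem_cat => /orP [] /mem_rep /flattenP [l /mapP [j1 _ ->]] /mapP [j2 _ ->];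
  exact: row_in.
move=> i; rewrite hsz count_cat !count_rep ffunE.
case: (ltnP i w) => hi /=.
  rewrite !count_blkA //; split => // _.
  have hw1 : maxn w 1 = w by lia.
  rewrite hw1.
  have := hA (leq_ltn_trans (leq0n _) hi).
  have : 0 < maxn (k - w) 1 by lia.
  nia.
rewrite !count_blkB //; split => // _.
have hk : maxn (k - w) 1 = k - w by have := ltn_ord i; lia.
rewrite hk.
have := hB (leq_ltn_trans hi (ltn_ord i)).
have : 0 < maxn w 1 by lia.
nia.
Qed.

Lemma odd_wit k (P : {set cube k}) (x : cube k) (s : seq (cube k)) : odd (size s) ->
  (forall y, y \in s -> y \in P) ->
  (forall i, x i = (size s < 2 * count (fun y : cube k => y i) s)) -> OMaj P x.
Proof.
move=> hodd hs hx.
exists (size s); split => //.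
rewrite inE; apply/existsP; exists [ffun j : 'I_(size s) => nth x s j].
apply/andP; split.
  by apply/forallP => j; rewrite ffunE; apply: hs; exact: mem_nth.
apply/forallP => i; rewrite /Maj hx; apply/eqP; congr (_ < 2 * _).
rewrite card_sum count_sum (big_nth x) big_mkord.
by apply: eq_bigr => j _; rewrite !ffunE.
Qed.

Lemma wit_OMaj k (P : {set cube k}) (x : cube k) s : Wit P x s -> OMaj P x.
Proof.
case=> hsz hs hx.
case hodd: (odd (size s)).
  apply: (odd_wit hodd hs) => i.
  have [hA hB] := hx i.
  case: (x i) hA hB => [-> //|_ /(_ isT) h]; apply/esym/negbTE; rewrite -leqNgt; lia.
have hev := odd_double_half (size s); rewrite hodd add0n -muln2 in hev.
set y0 := nth x s 0.
have hy0 : y0 \in s by exact: mem_nth.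
apply: (@odd_wit k P x (y0 :: s)).
- by rewrite /= hodd.
- move=> y; rewrite in_cons => /orP [/eqP -> | /hs //]; exact: hs.
move=> i /=.
have [hA hB] := hx i.
case: (x i) hA hB => [/(_ isT) h _ | _ /(_ isT) h]; case: (y0 i) => /=; apply/esym.
- lia.
- lia.
- apply/negbTE; rewrite -leqNgt; lia.
- apply/negbTE; rewrite -leqNgt; lia.
Qed.

Lemma perm_exists k (A : {set 'I_k}) :
  exists s : {perm 'I_k}, forall i, (s i \in A) = (i < #|A|).
Proof.
set e := enum A ++ enum (~: A).
have hsz : size e = k by rewrite size_cat -!cardE cardsC card_ord.
have he : uniq e.
  rewrite cat_uniq !enum_uniq /= andbT; apply/hasPn => i; rewrite !mem_enum inE.
  by move=> ->.
pose f (i : 'I_k) := nth i e i.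
have hf : forall i j : 'I_k, f i = nth j e i.
  by move=> i j; apply: set_nth_default; rewrite hsz.
have finj : injective f.
  move=> i j h; apply: ord_inj; apply/eqP.
  have h2 : nth i e i = nth i e j := etrans h (hf j i).
  by rewrite -(nth_uniq i _ _ he) ?hsz // h2.
exists (perm finj) => i; rewrite permE /f /e nth_cat -cardE.
case: ltnP => hi.
  by rewrite -(mem_enum (mem A)) mem_nth // -cardE.
have : nth i (enum (~: A)) (i - #|A|) \in enum (~: A).
  apply: mem_nth; rewrite -cardE.
  have hc := cardsC A; rewrite card_ord in hc.
  by have hik := ltn_ord i; rewrite -(ltn_add2l #|A|) subnKC // hc.
by rewrite mem_enum inE => /negbTE.
Qed.

Lemma hweight_perm k (y : cube k) (t : {perm 'I_k}) :
  hweight [ffun i => y (t i)] = hweight y.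
Proof.
rewrite /hweight.
have -> : [set i | [ffun i => y (t i)] i] = t @^-1: [set i | y i].
  by apply/setP => i; rewrite !inE ffunE.
exact: card_preimset (@perm_inj _ t).
Qed.

Lemma wit_perm k (S : {set 'I_k.+1}) (t : {perm 'I_k}) (x' x : cube k) s :
  (forall i, x i = x' (t i)) -> Wit (Ham S) x' s ->
  Wit (Ham S) x (map (fun y : cube k => [ffun i => y (t i)]) s).
Proof.
move=> hx [hsz hs hc]; split.
- by rewrite size_map.
- move=> y /mapP [z hz ->]; have := hs z hz.
  by rewrite !inE hweight_perm.
move=> i; rewrite size_map count_map hx.
have -> : count (preim (fun y : cube k => [ffun i0 => y (t i0)]) (fun y : cube k => y i)) s
   = count (fun y : cube k => y (t i)) s.
  by apply: eq_count => y; rewrite /= ffunE.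
exact: hc.
Qed.

Lemma ub L k M (xs : 'I_L -> cube k) (x : cube k) :
  (forall j, hweight (xs j) <= M) ->
  (forall i, x i -> L < 2 * #|[set j | xs j i]|) ->
  hweight x * L.+1 <= 2 * (L * M).
Proof.
move=> hM hx.
have e : \sum_i #|[set j | xs j i]| = \sum_j hweight (xs j).
  rewrite (eq_bigr (fun i => \sum_j (xs j i : nat))); last by move=> i _; rewrite card_sum.
  rewrite exchange_big /=; apply: eq_bigr => j _; by rewrite hweight_sum.
apply: (@leq_trans (\sum_(i in [set i | x i]) 2 * #|[set j | xs j i]|)).
  rewrite /hweight -sum_nat_const; apply: leq_sum => i; rewrite inE; exact: hx.
apply: (@leq_trans (\sum_i 2 * #|[set j | xs j i]|)).
  rewrite big_mkcond /=; apply: leq_sum => i _; by case: ifP.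
rewrite -big_distrr /= e leq_mul2l; apply/orP; right.
apply: (@leq_trans (\sum_(j < L) M)); first by apply: leq_sum => j _; exact: hM.
by rewrite sum_nat_const card_ord.
Qed.

Lemma hweightC k (y : cube k) : hweight [ffun i => ~~ y i] = k - hweight y.
Proof.
rewrite /hweight.
have -> : [set i | [ffun i => ~~ y i] i] = ~: [set i | y i].
  by apply/setP => i; rewrite !inE ffunE.
by rewrite cardsCs card_ord setCK.
Qed.

Lemma minS_le k (S : {set 'I_k.+1}) (s : 'I_k.+1) : s \in S -> minS S <= s.
Proof.
move=> hs; rewrite /minS.
have : s \in index_enum 'I_k.+1 by rewrite mem_index_enum.
elim: (index_enum _) => [//|x r IH]; rewrite big_cons in_cons.
case/orP => [/eqP <- | /IH h]; first by rewrite hs geq_minl.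
case: ifP => _ //; exact: leq_trans (geq_minr _ _) h.
Qed.

Lemma maxS_ge k (S : {set 'I_k.+1}) (s : 'I_k.+1) : s \in S -> s <= maxS S.
Proof. by move=> hs; rewrite /maxS; apply: (@leq_bigmax_cond _ (mem S) (fun s : 'I_k.+1 => val s)). Qed.

Lemma minS_att k (S : {set 'I_k.+1}) (s0 : 'I_k.+1) : s0 \in S ->
  exists2 m : 'I_k.+1, m \in S & val m = minS S.
Proof.
move=> hs0.
have : (minS S == k) || [exists m in S, val m == minS S].
  rewrite /minS; apply: (big_ind (fun v => (v == k) || [exists m in S, val m == v])).
  - by rewrite eqxx.
  - move=> a b ha hb; rewrite /minn; by case: ifP.
  - by move=> i hi; apply/orP; right; apply/existsP; exists i; rewrite hi eqxx.
case/orP => [/eqP hk | /existsP [m /andP [hm /eqP e]]]; last by exists m.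
exists s0 => //; change (nat_of_ord s0 = minS S); have := minS_le hs0; have := ltn_ord s0; lia.
Qed.

Lemma maxS_att k (S : {set 'I_k.+1}) (s0 : 'I_k.+1) : s0 \in S ->
  exists2 m : 'I_k.+1, m \in S & val m = maxS S.
Proof.
move=> hs0.
have hc : 0 < #|mem S| by apply/card_gt0P; exists s0.
have [m hm e] := eq_bigmax_cond (fun s : 'I_k.+1 => val s) hc.
by exists m => //; rewrite /maxS e.
Qed.

Lemma two_block k (S : {set 'I_k.+1}) w (t1 t2 : 'I_k.+1) :
  t1 \in S -> t2 \in S -> 2 * t1 <= w -> w + k <= 2 * t2 -> 0 < w -> w < k ->
  (0 < nat_of_ord t1) || (nat_of_ord t2 < k) ->
  exists l, Wit (Ham S) (xw k w) l.
Proof.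
move=> h1 h2 hw1 hw2 w0 wk ht.
have t2k := ltn_ord t2.
set D1 := w - 2 * t1.
set D2 := 2 * t2 - w - k.
have key : D1 * D2 < w * (k - w).
  have hD1 : D1 <= w by lia.
  have hD2 : D2 <= k - w by lia.
  case/orP: ht => ht.
    have : D1 < w by lia.
    move=> hl; apply: (@leq_ltn_trans (D1 * (k - w))); first exact: leq_mul.
    by rewrite ltn_pmul2r //; lia.
  have : D2 < k - w by lia.
  move=> hl; apply: (@leq_ltn_trans (w * D2)); first exact: leq_mul.
  by rewrite ltn_pmul2l //; lia.
set c := D2.+1.
exists (rep (w * c) (blk k w t1 0) ++ rep (D1 * c + 1) (blk k w w (t2 - w))).
apply: design => //.
- lia.
- lia.
- lia.
- by apply/existsP; exists t1; rewrite h1 addn0 /=.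
- apply/existsP; exists t2; rewrite h2 /=; apply/eqP; change (nat_of_ord t2 = w + (t2 - w)); lia.
- lia.
- move=> _.
  have e : 2 * (w * c * t1 + (D1 * c + 1) * w) = (w * c + (D1 * c + 1)) * w + w by rewrite /D1; nia.
  by rewrite e; lia.
- move=> _.
  set P := w * (k - w) in key.
  set Q := D1 * D2 in key.
  have e1 : 2 * (w * c * 0 + (D1 * c + 1) * (t2 - w)) = (D1 * c + 1) * (k - w) + c * Q + D2.
    rewrite /Q /c /D2; nia.
  have e2 : (w * c + (D1 * c + 1)) * (k - w) = (D1 * c + 1) * (k - w) + c * P.
    rewrite /P; nia.
  rewrite e1 e2.
  have : c * (Q + 1) <= c * P by rewrite leq_mul2l; apply/orP; right; lia.
  rewrite /c; nia.
Qed.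

Lemma constr k (S : {set 'I_k.+1}) w (s m M : 'I_k.+1) :
  s \in S -> m \in S -> M \in S -> 0 < nat_of_ord s -> nat_of_ord s < k ->
  2 * m + 1 <= w + k -> w + 1 <= 2 * M -> w <= k ->
  exists l, Wit (Ham S) (xw k w) l.
Proof.
move=> hs hm hM s0 sk hwm hwM hwk.
have mk := ltn_ord m; have Mk := ltn_ord M.
case: (boolP [exists t in S, nat_of_ord t == w]) => [/existsP [t /andP [ht /eqP et]] | hnS].
  exists (rep 1 (blk k w w 0) ++ rep 0 (blk k w w 0)).
  apply: design => //; try lia.
  - by apply/existsP; exists t; rewrite ht /= addn0 et.
  - by apply/existsP; exists t; rewrite ht /= addn0 et.
case: (boolP [exists t in S, (2 * t + 1 <= w + k) && (w + 1 <= 2 * t)]).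
  case/existsP => t /andP [ht /andP [ht1 ht2]].
  have tk := ltn_ord t.
  exists (rep 1 (blk k w (minn t w) (t - minn t w)) ++ rep 0 (blk k w (minn t w) (t - minn t w))).
  have hT : [exists t' in S, nat_of_ord t' == minn t w + (t - minn t w)].
    by apply/existsP; exists t; rewrite ht /=; apply/eqP; lia.
  apply: design => //; lia.
move/existsPn => hno.
have nw : forall t : 'I_k.+1, t \in S -> nat_of_ord t != w.
  by move=> t ht; apply/negP => he; move/existsPn: hnS => /(_ t); rewrite ht he.
have hm' := hno m; have hM' := hno M; have hs' := hno s.
rewrite hm /= in hm'; rewrite hM /= in hM'; rewrite hs /= in hs'.
have hnm := nw m hm; have hnM := nw M hM.
have w0 : 0 < w.
  case: (posnP w) => // w0; exfalso.
  move: hm' hnm; rewrite w0; lia.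
have wk : w < k.
  rewrite ltn_neqAle hwk andbT; apply/negP => /eqP wk; move: hM' hnM; rewrite wk.
  have := ltn_ord M; lia.
case: (leqP (2 * s) w) => hsw.
  apply: (@two_block k S w s M) => //.
  - move: hM'; lia.
  - by rewrite s0.
apply: (@two_block k S w m s) => //.
- move: hm'; lia.
- move: hs'; lia.
- by rewrite sk orbT.
Qed.

Lemma OMaj_elim k (P : {set cube k}) (x : cube k) : OMaj P x ->
  exists L (xs : 'I_L -> cube k), [/\ odd L, forall j, xs j \in P &
     forall i, x i = (L < 2 * #|[set j | xs j i]|)].
Proof.
case=> L [hL]; rewrite inE => /existsP [xs /andP [/forallP hP /forallP hx]].
exists L, xs; split => // i.
rewrite (eqP (hx i)) /Maj.
have -> : [set j | [ffun j => xs j i] j] = [set j | xs j i].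
  by apply/setP => j; rewrite !inE ffunE.
by [].
Qed.

Lemma mem_OMaj k (P : {set cube k}) (x : cube k) : x \in P -> OMaj P x.
Proof.
move=> hx; apply: (@odd_wit k P x [:: x]) => //.
- by move=> y; rewrite inE => /eqP ->.
by move=> i /=; case: (x i).
Qed.

Lemma const_ends k (y : cube k) : y \in Ham (ends k) -> forall i i', y i = y i'.
Proof.
rewrite inE => /existsP [s /andP [hs /eqP hw]].
rewrite inE in hs.
case/orP: hs => /eqP hs.
  have h : [set i | y i] = set0 by apply/cards0_eq; rewrite -/(hweight y) hw hs.
  have hf : forall j, y j = false by move=> j; have := in_set0 j; rewrite -h inE.
  by move=> i i'; rewrite !hf.
have h : [set i | y i] = setT.
  apply/eqP; rewrite eqEcard subsetT /= cardsT card_ord.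
  by rewrite -/(hweight y) hw hs.
have hf : forall j, y j = true by move=> j; have := in_setT j; rewrite -h inE.
by move=> i i'; rewrite !hf.
Qed.

Theorem claim4p7 (k : nat) (hk : 0 < k) (P : {set {ffun 'I_k -> bool}}) :
  (P \subset Ham (ends k) -> forall x, OMaj P x <-> x \in P) /\
  (~~ (P \subset Ham (ends k)) ->
   forall S : {set 'I_k.+1}, P = Ham S ->
   (exists s, s \in S :\: ends k) ->
   forall x, OMaj P x <-> x \in Ham (window S)).
Proof.
split.
  move=> hP x; split; last exact: mem_OMaj.
  case/OMaj_elim => L [xs [hL hxs hx]].
  have L0 : 0 < L by move: hL; case: (L).
  have hc : forall j i i', xs j i = xs j i' := fun j => const_ends (subsetP hP _ (hxs j)).
  pose i0 : 'I_k := Ordinal hk.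
  have hset : forall i, [set j | xs j i] = [set j | xs j i0].
    by move=> i; apply/setP => j; rewrite !inE (hc j i i0).
  have hxc : forall i, x i = x i0 by move=> i; rewrite !hx hset.
  case hx0: (x i0).
    have : 0 < #|[set j | xs j i0]| by move: hx0; rewrite hx; lia.
    case/card_gt0P => j; rewrite inE => hj.
    have -> : x = xs j by apply/ffunP => i; rewrite hxc hx0 (hc j i i0) hj.
    exact: hxs.
  case: (boolP [exists j, ~~ xs j i0]) => [/existsP [j hj] | /existsPn hall].
    have -> : x = xs j by apply/ffunP => i; rewrite hxc hx0 (hc j i i0) (negbTE hj).
    exact: hxs.
  exfalso.
  have h : [set j | xs j i0] = setT.
    by apply/setP => j; rewrite !inE; have := hall j; case: (xs j i0).
  move: hx0; rewrite hx h cardsT card_ord => /negbT; rewrite -leqNgt; lia.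
move=> _ S hPS [s hs] x; rewrite hPS.
rewrite !inE in hs; case/andP: hs => hse hsS.
have hse' : ~~ ((nat_of_ord s == 0) || (nat_of_ord s == k)) := hse.
have s0 : 0 < nat_of_ord s by move: hse'; lia.
have sk : nat_of_ord s < k by have := ltn_ord s; move: hse'; lia.
have [m hm em] := minS_att hsS; have [M hM eM] := maxS_att hsS.
have em' : nat_of_ord m = minS S := em.
have eM' : nat_of_ord M = maxS S := eM.
have hms := minS_le hsS; have hMs := maxS_ge hsS.
have wk : hweight x <= k by rewrite /hweight; have := max_card [set i | x i]; rewrite card_ord.
split.
  case/OMaj_elim => L [xs [hL hxs hx]].
  have hw : forall j, minS S <= hweight (xs j) <= maxS S.
    move=> j; have := hxs j; rewrite inE => /existsP [t /andP [ht /eqP e]].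
    by rewrite e minS_le // maxS_ge.
  have ub1 := @ub L k (maxS S) xs x (fun j => proj2 (andP (hw j))) (fun i hi => eq_ind (x i) is_true hi _ (hx i)).
  have ub2 := @ub L k (k - minS S) (fun j => [ffun i => ~~ xs j i]) [ffun i => ~~ x i].
  rewrite hweightC in ub2.
  have hL2 := odd_double_half L; rewrite hL -muln2 in hL2.
  have {}ub2 : (k - hweight x) * L.+1 <= 2 * (L * (k - minS S)).
    apply: ub2.
      move=> j; rewrite hweightC; have := hw j; have := hweight_perm (xs j) 1.
      have := max_card [set i | xs j i]; rewrite card_ord -/(hweight (xs j)).
      lia.
    move=> i; rewrite ffunE => hxi.
    have -> : [set j | [ffun i0 => ~~ xs j i0] i] = ~: [set j | xs j i].
      by apply/setP => j; rewrite !inE ffunE.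
    have hcC := cardsC [set j | xs j i]; rewrite card_ord in hcC.
    move: hxi; rewrite hx => /negbTE hxi; move/negbT: hxi; rewrite -leqNgt.
    lia.
  have Mpos : 0 < maxS S by move: hMs s0; lia.
  have mk : minS S < k by move: hms sk; lia.
  have hup : hweight x < 2 * maxS S by nia.
  have hlo : k - hweight x < 2 * (k - minS S) by nia.
  rewrite inE; apply/existsP; exists (inord (hweight x)).
  rewrite inE /= inordK ?ltnS // eqxx andbT.
  apply/andP; split; lia.
rewrite inE => /existsP [t /andP [ht /eqP ew]].
rewrite inE in ht; case/andP: ht => h1 h2.
have tk := ltn_ord t.
have ew' : hweight x = nat_of_ord t := ew.
rewrite -ew in h1 h2.
have hm1 : 2 * m + 1 <= hweight x + k by move: h1; rewrite em'; lia.
have hM1 : hweight x + 1 <= 2 * M by move: h2; rewrite eM'; lia.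
have [l hl] := @constr k S (hweight x) s m M hsS hm hM s0 sk hm1 hM1 wk.
have [sg hsg] := perm_exists [set i | x i].
apply: wit_OMaj; apply: (wit_perm (t := (sg^-1)%g) _ hl) => i.
by rewrite ffunE -(hsg ((sg^-1)%g i)) permKV inE.
Qed.
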